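(* Let $X$ be a Banach space as described in the context, let $f\in X$, and assume $\inf_{n\in\mathbb{N}}\|z^n\|>0$. If there exists a sequence $p_n\in\mathcal{P}_n[\mathbb{Z}]$ with $\lim_{n\to\infty}\|f-p_n\|=0$, then $f$ is a polynomial with integer coefficients.
   Context: $\mathbb{D}=\{z\in\mathbb{C}:|z|<1\}$. $X$ is a complex Banach space of functions analytic in $\mathbb{D}$ whose norm $\|\cdot\|$ satisfies: (i) $\|f(\cdot\, e^{it})\|=\|f(\cdot)\|$ for all $t\in\mathbb{R}$ and $f\in X$; (ii) $\|f\|<\infty$ for every entire function $f$; (iii) for all $f\in X$ and $g\in L[0,2\pi]$, $\big\|\frac{1}{2\pi}\int_0^{2\pi} f(ze^{it})g(t)\,dt\big\|\le \frac{1}{2\pi}\int_0^{2\pi}|g(t)|\,dt\cdot\|f\|$. $\|z^n\|$ is the norm in $X$ of $z\mapsto z^n$. A complex number is called an integer if its real and imaginary parts are integers; $\mathcal{P}_n[\mathbb{Z}]$ is the set of complex polynomials of degree at most $n-1$ with integer coefficients in this sense. *)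

(* Defs.v *)
From Stdlib Require Import Reals ZArith.
From mathcomp Require Import all_boot all_algebra.
From mathcomp Require Import all_classical all_reals all_analysis.
From mathcomp Require Import Rstruct Rstruct_topology.
From Coquelicot Require Import Coquelicot.

Local Open Scope R_scope.

Definition inD (z : C) : Prop := Cmod z < 1.

Definition fadd (f g : C -> C) : C -> C := fun z => (f z + g z)%C.
Definition fsub (f g : C -> C) : C -> C := fun z => (f z - g z)%C.
Definition fscal (c : C) (f : C -> C) : C -> C := fun z => (c * f z)%C.
Definition fzero : C -> C := fun _ => RtoC 0.

Fixpoint cpow (z : C) (n : nat) : C :=
  match n with O => RtoC 1 | S m => (cpow z m * z)%C end.

Definition monom (n : nat) : C -> C := fun z => cpow z n.

Definition cis (t : R) : C := (cos t, sin t).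

Definition holo_at (f : C -> C) (z : C) : Prop :=
  @ex_derive C_AbsRing C_NormedModule f z.
Definition analytic_in_D (f : C -> C) : Prop := forall z, inD z -> holo_at f z.
Definition entire (f : C -> C) : Prop := forall z, holo_at f z.

Definition I02pi : set R := `[0%R, (2 * PI)%R]%classic.

Definition L1_02pi (g : R -> C) : Prop :=
  (@lebesgue_measure R).-integrable I02pi (fun t => (Re (g t))%:E) /\
  (@lebesgue_measure R).-integrable I02pi (fun t => (Im (g t))%:E).

Definition Cint02pi (h : R -> C) : C :=
  (Rintegral (@lebesgue_measure R) I02pi (fun t => Re (h t)),
   Rintegral (@lebesgue_measure R) I02pi (fun t => Im (h t))).

Definition conv_op (f : C -> C) (g : R -> C) : C -> C :=
  fun z => (RtoC (/ (2 * PI)) * Cint02pi (fun t => (f (z * cis t) * g t)%C))%C.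

Definition L1norm_02pi (g : R -> C) : R :=
  / (2 * PI) * Rintegral (@lebesgue_measure R) I02pi (fun t => Cmod (g t)).

(* X is described by its carrier [inX] (a set of functions C -> C, only their
   values on D matter) and its norm [nrm]. *)
Definition admissible_space (inX : (C -> C) -> Prop) (nrm : (C -> C) -> R)
  : Prop :=
  (forall f g, (forall z, inD z -> f z = g z) -> inX f ->
      inX g /\ nrm g = nrm f) /\
  (forall f, inX f -> analytic_in_D f) /\
  inX fzero /\
  (forall f g, inX f -> inX g -> inX (fadd f g)) /\
  (forall c f, inX f -> inX (fscal c f)) /\
  (forall f, inX f -> 0 <= nrm f) /\
  (forall f, inX f -> nrm f = 0 -> forall z, inD z -> f z = RtoC 0) /\
  (forall c f, inX f -> nrm (fscal c f) = Cmod c * nrm f) /\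
  (forall f g, inX f -> inX g -> nrm (fadd f g) <= nrm f + nrm g) /\
  (forall u : nat -> C -> C, (forall n, inX (u n)) ->
     (forall eps, 0 < eps -> exists N, forall m n, (N <= m)%nat -> (N <= n)%nat ->
        nrm (fsub (u m) (u n)) < eps) ->
     exists l, inX l /\ forall eps, 0 < eps -> exists N, forall n, (N <= n)%nat ->
        nrm (fsub (u n) l) < eps) /\
  (forall f t, inX f -> inX (fun z => f (z * cis t)%C) /\
                        nrm (fun z => f (z * cis t)%C) = nrm f) /\
  (forall f, entire f -> inX f) /\
  (forall f g, inX f -> L1_02pi g ->
     inX (conv_op f g) /\ nrm (conv_op f g) <= L1norm_02pi g * nrm f).

Definition gint (a : Z * Z) : C := (IZR (fst a), IZR (snd a)).

Fixpoint psum (c : nat -> C) (z : C) (n : nat) : C :=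
  match n with
  | O => RtoC 0
  | S m => (psum c z m + c m * cpow z m)%C
  end.

(* p is in P_n[Z]: a polynomial of degree <= n-1 with Gaussian integer
   coefficients *)
Definition in_PnZ (n : nat) (p : C -> C) : Prop :=
  exists a : nat -> Z * Z, forall z, p z = psum (fun k => gint (a k)) z n.

Definition is_Zpoly_on_D (f : C -> C) : Prop :=
  exists (n : nat) (a : nat -> Z * Z),
    forall z, inD z -> f z = psum (fun k => gint (a k)) z n.

(* Main.v *)
Require Import Defs.
From Stdlib Require Import Reals ZArith Lra Lia.
From mathcomp Require Import all_boot all_algebra.
From mathcomp Require Import all_classical all_reals all_analysis.
From mathcomp Require Import Rstruct Rstruct_topology.
From Coquelicot Require Import Coquelicot.
Import GRing.Theory Num.Theory.
Local Open Scope R_scope.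

Lemma cpow_holo' n z : exists df, @is_derive C_AbsRing (AbsRing_NormedModule C_AbsRing) (fun w => cpow w n) z df.
Proof.
induction n as [|n IH]; simpl.
- eexists; apply is_derive_const.
- destruct IH as [df H].
  eexists.
  apply (@is_derive_mult C_AbsRing (fun w => cpow w n) (fun w => w)).
  + exact H.
  + apply is_derive_id.
  + intros; apply Cmult_comm.
Qed.

Lemma psum_holo' d M z : exists df, @is_derive C_AbsRing (AbsRing_NormedModule C_AbsRing) (fun w => psum d w M) z df.
Proof.
induction M as [|M IH]; simpl.
- eexists; apply is_derive_const.
- destruct IH as [df1 H1].
  destruct (cpow_holo' M z) as [df H].
  eexists.
  apply (@is_derive_plus C_AbsRing (AbsRing_NormedModule C_AbsRing) (fun w => psum d w M) (fun w => (d M * cpow w M)%C)).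
  exact H1.
  apply (@is_derive_mult C_AbsRing (fun _ => d M) (fun w => cpow w M)).
  + apply is_derive_const.
  + exact H.
  + intros; apply Cmult_comm.
Qed.

Lemma to_holo g z : (exists df, @is_derive C_AbsRing (AbsRing_NormedModule C_AbsRing) g z df) -> holo_at g z.
Proof.
intros [df H]. unfold holo_at.
apply (@ex_derive_ext C_AbsRing C_NormedModule (fun x => @scal C_AbsRing C_NormedModule (g x) (RtoC 1))).
- intro t. change ((g t * RtoC 1)%C = g t). apply Cmult_1_r.
- apply (@ex_derive_scal_l C_AbsRing C_NormedModule g z (RtoC 1)). exists df; exact H.
Qed.

Lemma psum_entire d M : entire (fun z => psum d z M).
Proof.
intro z. apply to_holo, psum_holo'.
Qed.

Definition mpi : R := pi.
Definition mcos (t : R) : R := fst (cis t).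
Definition msin (t : R) : R := snd (cis t).
Lemma mcosD x y : mcos (x + y) = mcos x * mcos y - msin x * msin y.
Proof. exact: (trigo.cosD x y). Qed.
Lemma msinD x y : msin (x + y) = msin x * mcos y + mcos x * msin y.
Proof. exact: (trigo.sinD x y). Qed.
Lemma mcos0 : mcos 0 = 1. Proof. exact: trigo.cos0. Qed.
Lemma msin0 : msin 0 = 0. Proof. exact: trigo.sin0. Qed.
Lemma mcs2 x : mcos x * mcos x + msin x * msin x = 1.
Proof. have := trigo.cos2Dsin2 x. rewrite !expr2. exact. Qed.
Lemma msinN x : msin (- x) = - msin x. Proof. exact: trigo.sinN. Qed.
Lemma mpi_gt0 : 0 < mpi. Proof. apply/RltP. exact: trigo.pi_gt0. Qed.
Lemma msin_pos x : 0 < x < mpi -> 0 < msin x.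
Proof. intros [H1 H2]. apply/RltP. apply: trigo.sin_gt0_pi. apply/andP; split; apply/RltP; assumption. Qed.
Lemma mcos2pi n : mcos (INR n * (2 * mpi)) = 1 /\ msin (INR n * (2 * mpi)) = 0.
Proof.
have H1 := trigo.periodicn (@trigo.cosD2pi R) n 0.
have H2 := trigo.periodicn (@trigo.sinD2pi R) n 0.
rewrite add0r trigo.cos0 in H1. rewrite add0r trigo.sin0 in H2.
have E : INR n * (2 * mpi) = GRing.natmul (GRing.natmul (pi : R) 2) n.
{ rewrite mulr2n -mulr_natl -INRE. rewrite /mpi. change (INR n * (2 * pi) = INR n * (pi + pi)). ring. }
rewrite E. split; [exact H1 | exact H2].
Qed.

Lemma Cpair_eq (a b c d : R) : a = c -> b = d -> ((a, b) : C) = (c, d).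
Proof. intros -> ->; reflexivity. Qed.

Lemma cis_eq t : cis t = (mcos t, msin t).
Proof. reflexivity. Qed.

Lemma cis_add a b : cis (a + b) = (cis a * cis b)%C.
Proof.
rewrite !cis_eq. unfold Cmult. cbn [fst snd]. apply Cpair_eq; [rewrite mcosD | rewrite msinD]; ring.
Qed.

Lemma cis0 : cis 0 = RtoC 1.
Proof. rewrite cis_eq mcos0 msin0. reflexivity. Qed.

Lemma Cmod_cis t : Cmod (cis t) = 1.
Proof.
rewrite cis_eq. unfold Cmod; cbn [fst snd]. rewrite <- sqrt_1. f_equal.
pose proof (mcs2 t). simpl. lra.
Qed.

Lemma cpow_cis n t : cpow (cis t) n = cis (INR n * t).
Proof.
induction n as [|n IH]; cbn [cpow].
- rewrite Rmult_0_l cis0; reflexivity.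
- rewrite IH -cis_add. f_equal. rewrite S_INR; ring.
Qed.

Lemma cpow_mul a b n : cpow (a * b) n = (cpow a n * cpow b n)%C.
Proof. induction n as [|n IH]; simpl. ring. rewrite IH; ring. Qed.

Lemma cpow_one n : cpow (RtoC 1) n = RtoC 1.
Proof. induction n as [|n IH]; simpl. reflexivity. rewrite IH; ring. Qed.

Fixpoint csum (u : nat -> C) (n : nat) : C :=
  match n with O => RtoC 0 | S n => (csum u n + u n)%C end.

Lemma csum_ext u v n : (forall j, u j = v j) -> csum u n = csum v n.
Proof. intro H; induction n; simpl; [reflexivity| rewrite IHn H; reflexivity]. Qed.

Lemma csum_scal c u n : csum (fun j => c * u j)%C n = (c * csum u n)%C.
Proof. induction n; simpl. ring. rewrite IHn; ring. Qed.

Lemma csum_const1 n : csum (fun _ => RtoC 1) n = RtoC (INR n).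
Proof.
induction n; cbn [csum]. reflexivity. rewrite IHn. rewrite S_INR.
unfold RtoC, Cplus; simpl. apply Cpair_eq; ring.
Qed.

Lemma geom w n : ((w - 1) * csum (cpow w) n = cpow w n - 1)%C.
Proof. induction n; simpl. ring. rewrite Cmult_plus_distr_l IHn. ring. Qed.

Lemma geom0 w n : w <> RtoC 1 -> cpow w n = RtoC 1 -> csum (cpow w) n = RtoC 0.
Proof.
intros Hw Hn. pose proof (geom w n) as G. rewrite Hn in G.
assert (Hw1 : (w - 1)%C <> RtoC 0).
{ intro E. apply Hw. rewrite <- (Cplus_0_l (RtoC 1)). rewrite <- E. ring. }
replace (csum (cpow w) n) with (/(w-1) * ((w - 1) * csum (cpow w) n))%C by (field; exact Hw1).
rewrite G. ring.
Qed.

Lemma cis_neg1 x : cis x = RtoC 1 -> cis (- x) = RtoC 1.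
Proof.
intro H. rewrite <- (Cmult_1_r (cis (-x))). rewrite <- cis0 at 2. rewrite <- H at 1. rewrite <- cis_add.
replace (- x + x) with 0 by ring. reflexivity.
Qed.

Lemma cis_2pi n : cis (INR n * (2 * mpi)) = RtoC 1.
Proof. destruct (mcos2pi n) as [H1 H2]. rewrite cis_eq H1 H2. reflexivity. Qed.

Lemma ratio01 (a b N r : R) : 0 < N -> 0 <= a -> a < b -> b < N -> r * N = b - a -> 0 < r < 1.
intros. split.
- destruct (Rle_or_lt r 0); [|lra]. assert (0 <= - (r * N)) by (replace (- (r*N)) with ((-r)*N) by ring; apply Rmult_le_pos; lra). lra.
- destruct (Rle_or_lt 1 r); [|lra]. assert (0 <= r * N - N) by (replace (r*N - N) with ((r-1)*N) by ring; apply Rmult_le_pos; lra). lra.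
Qed.

Lemma msin_nz m k N : (lt 0 N) -> (lt m N) -> (lt k N) -> m <> k ->
  msin ((INR m - INR k) / INR N * mpi) <> 0.
Proof.
intros HN Hm Hk Hmk.
assert (HNr : 0 < INR N) by (apply lt_0_INR; lia).
pose proof mpi_gt0 as Hpi.
destruct (Nat.lt_total m k) as [Hlt|[Heq|Hgt]]; [| lia |].
- assert (Hr : 0 < (INR k - INR m) / INR N < 1).
  { assert (INR m < INR k) by (apply lt_INR; lia). assert (INR k < INR N) by (apply lt_INR; lia).
    assert (Ed : (INR k - INR m) / INR N * INR N = INR k - INR m) by (field; lra).
    apply (ratio01 (INR m) (INR k) (INR N)); auto. apply pos_INR. }
  assert (0 < msin ((INR k - INR m) / INR N * mpi)) by (apply msin_pos; destruct Hr; split; nra).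
  replace ((INR k - INR m) / INR N * mpi) with (- ((INR m - INR k) / INR N * mpi)) in H by (field; lra).
  rewrite msinN in H. lra.
- assert (Hr : 0 < (INR m - INR k) / INR N < 1).
  { assert (INR k < INR m) by (apply lt_INR; lia). assert (INR m < INR N) by (apply lt_INR; lia).
    assert (Ed : (INR m - INR k) / INR N * INR N = INR m - INR k) by (field; lra).
    apply (ratio01 (INR k) (INR m) (INR N)); auto. apply pos_INR. }
  assert (0 < msin ((INR m - INR k) / INR N * mpi)) by (apply msin_pos; destruct Hr; split; nra).
  lra.
Qed.

Section Filt.
Variables (N k : nat).
Definition tt : R := 2 * mpi / INR N.
Definition cc (j : nat) : C := (RtoC (/ INR N) * cis (- (INR k * (INR j * tt))))%C.
Definition Spart (m J : nat) : C := csum (fun j => cc j * cis (INR m * (INR j * tt)))%C J.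

Lemma Spart_val m : (lt 0 N) -> (lt m N) -> (lt k N) ->
  Spart m N = if Nat.eqb m k then RtoC 1 else RtoC 0.
Proof.
intros HN Hm Hk.
assert (HNr : 0 < INR N) by (apply lt_0_INR; lia).
set (w := cis ((INR m - INR k) * tt)).
unfold Spart.
rewrite (csum_ext _ (fun j => RtoC (/ INR N) * cpow w j)%C).
2:{ intro j. unfold cc, w. rewrite cpow_cis -Cmult_assoc -cis_add. f_equal. f_equal. ring. }
rewrite csum_scal.
destruct (Nat.eqb_spec m k) as [E|E].
- subst m. unfold w. rewrite Rminus_diag Rmult_0_l cis0.
  rewrite (csum_ext _ (fun _ => RtoC 1)). 2:{ intro; apply cpow_one. }
  rewrite csum_const1. rewrite <- RtoC_mult. rewrite Rinv_l. reflexivity. lra.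
- rewrite geom0. ring.
  + unfold w. intro H. apply (msin_nz m k N HN Hm Hk E).
    set (phi := (INR m - INR k) / INR N * mpi).
    assert (Hc : mcos (phi + phi) = 1).
    { replace (phi + phi) with ((INR m - INR k) * tt). change (fst (cis ((INR m - INR k) * tt)) = 1).
      rewrite H; reflexivity. unfold phi, tt; field; lra. }
    rewrite mcosD in Hc. pose proof (mcs2 phi). nra.
  + unfold w. rewrite cpow_cis.
    replace (INR N * ((INR m - INR k) * tt)) with (INR m * (2 * mpi) + - (INR k * (2 * mpi)))
      by (unfold tt; field; lra).
    rewrite cis_add cis_2pi cis_neg1. ring. apply cis_2pi.
Qed.
End Filt.

Lemma psum_add a b z M : (psum a z M + psum b z M)%C = psum (fun m => a m + b m)%C z M.
Proof. induction M; cbn [psum]. ring. rewrite <- IHM. ring. Qed.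

Lemma psum_scal c a z M : (c * psum a z M)%C = psum (fun m => c * a m)%C z M.
Proof. induction M; cbn [psum]. ring. rewrite <- IHM. ring. Qed.

Lemma psum_ext_lt a b z M : (forall m, lt m M -> a m = b m) -> psum a z M = psum b z M.
Proof.
induction M; intro H; cbn [psum]. reflexivity.
rewrite IHM. rewrite H. reflexivity. lia. intros; apply H; lia.
Qed.

Lemma psum_zero z M : psum (fun _ => RtoC 0) z M = RtoC 0.
Proof. induction M; cbn [psum]. reflexivity. rewrite IHM. ring. Qed.

Lemma psum_rot d z s M : psum d (z * cis s)%C M = psum (fun m => d m * cis (INR m * s))%C z M.
Proof. induction M; cbn [psum]. reflexivity. rewrite IHM cpow_mul cpow_cis. ring. Qed.

Lemma psum_delta d z k M :
  psum (fun m => d m * (if Nat.eqb m k then RtoC 1 else RtoC 0))%C z M =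
  if Nat.ltb k M then (d k * cpow z k)%C else RtoC 0.
Proof.
induction M; cbn [psum]. reflexivity.
rewrite IHM. destruct (Nat.eqb_spec M k) as [E|E].
- subst M. replace (Nat.ltb k k) with false by (symmetry; apply Nat.ltb_irrefl).
  replace (Nat.ltb k (S k)) with true by (symmetry; apply Nat.ltb_lt; lia). ring.
- destruct (Nat.ltb_spec k M) as [L|L]; destruct (Nat.ltb_spec k (S M)) as [L'|L']; try lia; ring.
Qed.

Fixpoint filt (N k : nat) (q : C -> C) (J : nat) : C -> C :=
  match J with
  | O => fzero
  | S J => fadd (filt N k q J) (fscal (cc N k J) (fun z => q (z * cis (INR J * tt N))%C))
  end.

Lemma filt_val N k q d M : (forall z, q z = psum d z M) ->
  forall J z, filt N k q J z = psum (fun m => d m * Spart N k m J)%C z M.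
Proof.
intros Hq J. induction J as [|J IH]; intro z; cbn [filt].
- unfold fzero. rewrite (psum_ext_lt _ (fun _ => RtoC 0)). symmetry; apply psum_zero.
  intros m _. unfold Spart; cbn [csum]. ring.
- unfold fadd, fscal. rewrite IH Hq psum_rot psum_scal psum_add.
  apply psum_ext_lt. intros m _. unfold Spart; cbn [csum]. fold (Spart N k m J).
  replace (INR m * (INR J * tt N)) with (INR m * (INR J * tt N)) by reflexivity. ring.
Qed.

Lemma monom_entire k : entire (monom k).
Proof. intro z. apply to_holo. unfold monom. apply cpow_holo'. Qed.

Lemma Cmod_cc N k j : lt 0 N -> Cmod (cc N k j) = / INR N.
Proof.
intro HN. unfold cc. rewrite Cmod_mult Cmod_R Cmod_cis Rmult_1_r.
apply Rabs_pos_eq. left. apply Rinv_0_lt_compat, lt_0_INR. lia.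
Qed.

Lemma coef_bound inX nrm d M k : admissible_space inX nrm -> lt k M ->
  Cmod (d k) * nrm (monom k) <= nrm (fun z => psum d z M).
Proof.
intros Hadm HkM.
destruct Hadm as (Hext & Han & H0 & Hadd & Hsc & Hpos & Hn0 & Hnsc & Htri & Hcomp & Hrot & Hent & Hconv).
set (q := fun z => psum d z M).
assert (Hq : inX q) by (apply Hent, psum_entire).
assert (HM : lt 0 M) by lia.
assert (HMr : 0 < INR M) by (apply lt_0_INR; lia).
assert (Hin : forall J, inX (filt M k q J)).
{ induction J; cbn [filt]. exact H0. apply Hadd; auto. apply Hsc. apply Hrot. exact Hq. }
assert (Hz : nrm fzero = 0).
{ assert (E : nrm (fscal (RtoC 0) fzero) = nrm fzero).
  { apply (Hext fzero). intros z _. unfold fscal, fzero. ring. exact H0. }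
  rewrite <- E, Hnsc; auto. rewrite Cmod_0. ring. }
assert (Hnb : forall J, nrm (filt M k q J) <= INR J * / INR M * nrm q).
{ induction J; cbn [filt].
  - rewrite Hz. simpl. lra.
  - eapply Rle_trans. apply Htri. apply Hin. apply Hsc, Hrot, Hq.
    rewrite Hnsc. 2: apply Hrot, Hq. destruct (Hrot q (INR J * tt M) Hq) as [_ ->].
    rewrite Cmod_cc; auto. rewrite S_INR. lra. }
assert (Hval : forall z, filt M k q M z = fscal (d k) (monom k) z).
{ intro z. assert (Hqd : forall w, q w = psum d w M) by reflexivity. rewrite (filt_val M k q d M Hqd M z).
  rewrite (psum_ext_lt _ (fun m => d m * (if Nat.eqb m k then RtoC 1 else RtoC 0))%C).
  - rewrite psum_delta. replace (Nat.ltb k M) with true by (symmetry; apply Nat.ltb_lt; lia).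
    reflexivity.
  - intros m Hm. rewrite Spart_val; auto. }
destruct (Hext (filt M k q M) (fscal (d k) (monom k)) (fun z _ => Hval z) (Hin M)) as [_ E].
rewrite <- Hnsc. 2: apply Hent, monom_entire. rewrite E.
eapply Rle_trans. apply Hnb.
rewrite Rinv_r. lra. lra.
Qed.

Definition trunc (n : nat) (a : nat -> Z * Z) (m : nat) : Z * Z :=
  if Nat.ltb m n then a m else (Z0, Z0).

Lemma psum_trunc a n M z : le n M ->
  psum (fun m => gint (trunc n a m)) z M = psum (fun m => gint (a m)) z n.
Proof.
intro H. induction H as [|M H IH].
- apply psum_ext_lt. intros m Hm. unfold trunc.
  replace (Nat.ltb m n) with true by (symmetry; apply Nat.ltb_lt; lia). reflexivity.
- cbn [psum]. rewrite IH. unfold trunc.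
  replace (Nat.ltb M n) with false by (symmetry; apply Nat.ltb_ge; lia).
  unfold gint; cbn [fst snd].
  change ((IZR Z0, IZR Z0) : C) with (RtoC (IZR Z0)). ring.
Qed.

Lemma psum_sub a b z M : (psum a z M - psum b z M)%C = psum (fun m => a m - b m)%C z M.
Proof. induction M; cbn [psum]. ring. rewrite <- IHM. ring. Qed.

Lemma small_gint (u v : Z * Z) : Cmod (gint u - gint v)%C < 1 -> u = v.
Proof.
destruct u as [x1 y1], v as [x2 y2]. unfold gint; cbn [fst snd]. intro H.
pose proof (Rmax_Cmod ((IZR x1, IZR y1) - (IZR x2, IZR y2))%C) as H2.
unfold Cminus, Cplus, Copp in H2, H. cbn [fst snd] in H2, H.
rewrite <- !opp_IZR, <- !plus_IZR in H2, H.
assert (A : Rabs (IZR (x1 + - x2)) < 1) by (eapply Rle_lt_trans; [apply Rmax_l|]; eapply Rle_lt_trans; [exact H2| exact H]).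
assert (B : Rabs (IZR (y1 + - y2)) < 1) by (eapply Rle_lt_trans; [apply Rmax_r|]; eapply Rle_lt_trans; [exact H2| exact H]).
apply Rabs_def2 in A, B. destruct A as [A1 A2], B as [B1 B2].
assert (A1p : IZR (-1) < IZR (x1 + - x2)) by lra. assert (B1p : IZR (-1) < IZR (y1 + - y2)) by lra. apply lt_IZR in A1p, A1, B1p, B1. f_equal; lia.
Qed.

Theorem theorem5p1 (inX : (C -> C) -> Prop) (nrm : (C -> C) -> R)
  (f : C -> C) :
  admissible_space inX nrm ->
  inX f ->
  (exists c : R, Rlt 0 c /\ forall n : nat, Rle c (nrm (monom n))) ->
  (exists p : nat -> C -> C,
     (forall n, in_PnZ n (p n)) /\
     forall eps : R, Rlt 0 eps -> exists N : nat, forall n : nat,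
       le N n -> Rlt (nrm (fsub f (p n))) eps) ->
  is_Zpoly_on_D f.
Proof.
intros Hadm Hf [c [Hc Hcm]] [p [Hp Hlim]].
pose proof Hadm as Hadm'.
destruct Hadm as (Hext & Han & H0 & Hadd & Hsc & Hpos & Hn0 & Hnsc & Htri & Hcomp & Hrot & Hent & Hconv).
assert (HpX : forall n, inX (p n)).
{ intro n. destruct (Hp n) as [a Ha].
  apply (Hext (fun z => psum (fun k => gint (a k)) z n)).
  intros z _; symmetry; apply Ha. apply Hent, psum_entire. }
assert (HfpX : forall n, inX (fsub f (p n))).
{ intro n. apply (Hext (fadd f (fscal (RtoC (-1)) (p n)))).
  intros z _. unfold fadd, fscal, fsub. ring. apply Hadd; auto. }
assert (Hneg : forall h, inX h -> nrm (fscal (RtoC (-1)) h) = nrm h).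
{ intros h Hh. rewrite Hnsc; auto. rewrite Cmod_R Rabs_Ropp Rabs_R1. ring. }
assert (Hc2 : 0 < c / 2) by lra.
destruct (Hlim _ Hc2) as [N0 HN0].
assert (Hstab : forall n, le N0 n -> forall z, p n z = p N0 z).
{ intros n Hn. destruct (Hp n) as [a Ha], (Hp N0) as [b Hb].
  set (M := Nat.max n N0).
  set (d := fun m => (gint (trunc n a m) - gint (trunc N0 b m))%C).
  assert (Hqd : forall z, psum d z M = (p n z - p N0 z)%C).
  { intro z. rewrite Ha Hb -(psum_trunc a n M) -?(psum_trunc b N0 M); try lia.
    unfold d. rewrite psum_sub. reflexivity. }
  set (G := fadd (fsub f (p N0)) (fscal (RtoC (-1)) (fsub f (p n)))).
  assert (HG : inX G) by (apply Hadd; auto).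
  assert (HnG : nrm G < c).
  { eapply Rle_lt_trans. apply Htri; auto. rewrite Hneg; auto.
    pose proof (HN0 N0 (le_n _)). pose proof (HN0 n Hn). lra. }
  assert (Hnq : nrm (fun z => psum d z M) < c).
  { destruct (Hext G (fun z => psum d z M)) as [_ ->]; auto.
    intros z _. rewrite Hqd. unfold G, fadd, fscal, fsub. ring. }
  assert (Hd0 : forall m, lt m M -> d m = RtoC 0).
  { intros m Hm. pose proof (coef_bound inX nrm d M m Hadm' Hm) as Hb1.
    assert (Hb2 : Cmod (d m) * c <= Cmod (d m) * nrm (monom m))
      by (apply Rmult_le_compat_l; [apply Cmod_ge_0 | apply Hcm]).
    assert (Hlt : Cmod (d m) < 1).
    { destruct (Rle_or_lt 1 (Cmod (d m))) as [Hge|Hlt]; auto.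
      assert (c <= Cmod (d m) * c) by (rewrite <- (Rmult_1_l c) at 1; apply Rmult_le_compat_r; lra). lra. }
    unfold d in Hlt |- *. rewrite (small_gint _ _ Hlt). ring. }
  intro z. assert (E : (p n z - p N0 z)%C = RtoC 0).
  { rewrite <- Hqd. rewrite (psum_ext_lt _ (fun _ => RtoC 0)); auto. apply psum_zero. }
  replace (p n z) with ((p n z - p N0 z) + p N0 z)%C by ring. rewrite E. ring. }
assert (Hzero : nrm (fsub f (p N0)) = 0).
{ apply Rle_antisym; [| apply Hpos; auto].
  apply Rnot_lt_le; intro Hgt.
  destruct (Hlim _ Hgt) as [N1 HN1].
  pose proof (HN1 (Nat.max N0 N1) ltac:(lia)) as Hlt.
  destruct (Hext (fsub f (p (Nat.max N0 N1))) (fsub f (p N0))) as [_ E]; auto.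
  intros z _. unfold fsub. rewrite Hstab; auto. lia.
  lra. }
destruct (Hp N0) as [b Hb].
exists N0, b. intros z Hz.
pose proof (Hn0 _ (HfpX N0) Hzero z Hz) as E. unfold fsub in E.
rewrite <- Hb. replace (f z) with ((f z - p N0 z) + p N0 z)%C by ring. rewrite E. ring.
Qed.
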